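(* Let $n\geq 2$ be an integer and let $\psi,\phi$ be homogeneous and bi-Lipschitz (as defined in the context). Then the map $H:\mathbb{R}^{2\times n}\to\mathbb{R}^m$ defined in the context is bi-Lipschitz with respect to $d_{\mathcal{G}_{+}}$: there exist constants $0<a\leq b$ such that for all ${X},{Y}\in\mathbb{R}^{2\times n}$, $$a\, d_{\mathcal{G}_{+}}({X},{Y})\leq\|H({X})-H({Y})\|_\infty\leq b\, d_{\mathcal{G}_{+}}({X},{Y}).$$
   Context: For ${X}\in\mathbb{R}^{2\times n}$ with columns $x_1,\dots,x_n$, let $\bar{X}$ be its centralization, i.e. the point set with columns $x_j-\frac1n\sum_k x_k$. For $x=[a,b]\in\mathbb{R}^2$ write $x^\perp=[-b,a]$. If $\bar{X}=0$ set $H({X})=0_m$. Otherwise, writing $x_1,\dots,x_n$ for the columns of $\bar X$, define $$h_i=\psi\Big(\|x_i\|_2,\ \{\!\{\big(\tfrac{x_i\cdot x_j}{\|\bar X\|_F},\tfrac{x_i^\perp\cdot x_j}{\|\bar X\|_F},\|x_j\|_2\big)\mid j\in[n]\setminus\{i\}\}\!\}\Big),\qquad H({X})=\phi(\{\!\{h_i\mid i\in[n]\}\!\}).$$ For multisets $S=\{\!\{s_1,\dots,s_N\}\!\}$, $S'=\{\!\{s'_1,\dots,s'_N\}\!\}$ of vectors in a Euclidean space, $\mathcal{W}_\infty(S,S')=\min_{\tau\in S_N}\max_{i}\|s_i-s'_{\tau(i)}\|_\infty$. The function $\phi$ (on multisets of $n$ vectors) is bi-Lipschitz if there are $0<c_\phi\le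 C_\phi$ with $c_\phi\mathcal{W}_\infty(S,S')\le\|\phi(S)-\phi(S')\|_\infty\le C_\phi\mathcal{W}_\infty(S,S')$; the function $\psi$ (on pairs of a vector and a multiset of $n-1$ vectors) is bi-Lipschitz if there are $0<c_\psi\le C_\psi$ with $c_\psi\max\{\|v-v'\|_\infty,\mathcal{W}_\infty(S,S')\}\le\|\psi(v,S)-\psi(v',S')\|_\infty\le C_\psi\max\{\|v-v'\|_\infty,\mathcal{W}_\infty(S,S')\}$. Homogeneity means $\phi(tS)=t\phi(S)$ and $\psi(tv,tS)=t\psi(v,S)$ for all $t>0$ (where $tS$ scales every element). The group $\mathcal{G}_{+}$ acts on $\mathbb{R}^{2\times n}$ by column permutations, a common proper rotation $R\in SO(2)$, and a common translation; $d_{\mathcal{G}_{+}}({X},{Y})=\min_{(\pi,R,t)\in S_n\times SO(2)\times\mathbb{R}^2}\big[\sum_j\|x_j-Ry_{\pi(j)}+t\|_2^2\big]^{1/2}$. *)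

(* Defs.v *)
From HB Require Import structures.
From mathcomp Require Import all_boot all_order all_algebra all_fingroup.
From mathcomp Require Import boolp classical_sets reals.
Set Implicit Arguments. Unset Strict Implicit. Unset Printing Implicit Defensive.
Import Order.TTheory GRing.Theory Num.Theory.
Local Open Scope ring_scope.

Section Defs.
Variable R : realType.

Definition normInf (k : nat) (v : 'rV[R]_k) : R := \big[Num.max/0]_(i < k) `|v 0 i|.

(* W_infinity distance between multisets of N vectors, given by enumerations *)
Definition Winf (N k : nat) (S S' : 'I_N -> 'rV[R]_k) : R :=
  let f := fun s : 'S_N => \big[Num.max/0]_(i < N) normInf (S i - S' (s i)) in
  \big[Num.min/f 1%g]_(s : 'S_N) f s.

(* phi : multisets of n vectors in R^d -> R^m (multiset given by an enumeration) *)
Definition phi_biLipschitz (n d m : nat) (phi : ('I_n -> 'rV[R]_d) -> 'rV[R]_m) :=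
  exists c C : R, 0 < c /\ c <= C /\ forall S S',
    c * Winf S S' <= normInf (phi S - phi S') /\ normInf (phi S - phi S') <= C * Winf S S'.

Definition phi_homogeneous (n d m : nat) (phi : ('I_n -> 'rV[R]_d) -> 'rV[R]_m) :=
  forall (t : R) S, 0 < t -> phi (fun i => t *: S i) = t *: phi S.

(* psi : (vector in R^p, multiset of N vectors in R^k) -> R^d *)
Definition psi_biLipschitz (p N k d : nat) (psi : 'rV[R]_p -> ('I_N -> 'rV[R]_k) -> 'rV[R]_d) :=
  exists c C : R, 0 < c /\ c <= C /\ forall v v' S S',
    c * Num.max (normInf (v - v')) (Winf S S') <= normInf (psi v S - psi v' S') /\
    normInf (psi v S - psi v' S') <= C * Num.max (normInf (v - v')) (Winf S S').

Definition psi_homogeneous (p N k d : nat) (psi : 'rV[R]_p -> ('I_N -> 'rV[R]_k) -> 'rV[R]_d) :=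
  forall (t : R) v S, 0 < t -> psi (t *: v) (fun i => t *: S i) = t *: psi v S.

Definition centralize (n : nat) (X : 'M[R]_(2, n)) : 'M[R]_(2, n) :=
  \matrix_(i, j) (X i j - (\sum_(k < n) X i k) / n%:R).

Definition norm2 (x : 'cV[R]_2) : R := Num.sqrt (x 0 0 ^+ 2 + x 1 0 ^+ 2).
Definition dot2 (x y : 'cV[R]_2) : R := x 0 0 * y 0 0 + x 1 0 * y 1 0.
Definition perp2 (x : 'cV[R]_2) : 'cV[R]_2 := \col_(i < 2) (if i == 0 then - x 1 0 else x 0 0).
Definition frob (n : nat) (X : 'M[R]_(2, n)) : R := Num.sqrt (\sum_(i < 2) \sum_(j < n) X i j ^+ 2).

Definition vec1 (a : R) : 'rV[R]_1 := \row_(k < 1) a.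
Definition vec3 (a b c : R) : 'rV[R]_3 :=
  \row_(k < 3) (if k == 0 :> nat then a else if k == 1 :> nat then b else c).

Definition Hmap (n d m : nat) (psi : 'rV[R]_1 -> ('I_n.-1 -> 'rV[R]_3) -> 'rV[R]_d)
    (phi : ('I_n -> 'rV[R]_d) -> 'rV[R]_m) (X : 'M[R]_(2, n)) : 'rV[R]_m :=
  let Xb := centralize X in
  if Xb == 0 then 0 else
  let F := frob Xb in
  phi (fun i : 'I_n =>
    psi (vec1 (norm2 (col i Xb)))
        (fun j : 'I_n.-1 =>
           let xj := col (lift i j) Xb in
           vec3 (dot2 (col i Xb) xj / F) (dot2 (perp2 (col i Xb)) xj / F) (norm2 xj))).

Definition SO2 (Q : 'M[R]_2) : Prop := Q *m Q^T = 1%:M /\ \det Q = 1.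

(* d_{G+}(X, Y): min over (pi, Q, t) in S_n x SO(2) x R^2 (taken as inf; it is attained) *)
Definition dGplus (n : nat) (X Y : 'M[R]_(2, n)) : R :=
  inf [set r | exists (s : 'S_n) (Q : 'M[R]_2) (t : 'cV[R]_2), SO2 Q /\
     r = Num.sqrt (\sum_(j < n)
           (let v := col j X - Q *m col (s j) Y + t in v 0 0 ^+ 2 + v 1 0 ^+ 2))].

End Defs.

(* Main.v *)
Require Import Defs.
From HB Require Import structures.
From mathcomp Require Import all_boot all_order all_algebra all_fingroup.
From mathcomp Require Import boolp classical_sets reals.
From mathcomp Require Import ring lra.
Import Order.TTheory GRing.Theory Num.Theory.
Local Open Scope ring_scope.
Set Implicit Arguments. Unset Strict Implicit. Unset Printing Implicit Defensive.


Section Aux.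
Variable R : realType.

Lemma det22 (Q : 'M[R]_2) : \det Q = Q 0 0 * Q 1 1 - Q 0 1 * Q 1 0.
Proof.
rewrite (expand_det_row _ 0) !big_ord_recl big_ord0 /cofactor !det_mx11 !mxE /=.
have e1 : forall a : 'I_1, lift (0:'I_2) a = 1 by move=> a; apply/val_inj; case: a => [[]].
have e2 : forall a b : 'I_1, lift (lift (0:'I_2) a) b = 0 by move=> a b; apply/val_inj; case: a => [[]]/=; case: b => [[]].

rewrite !e2 !e1 /bump /= add0n expr0 expr1 mul1r mulN1r addr0 mulrN. done.
Qed.


Lemma le_sq (a b : R) : 0 <= b -> a ^+ 2 <= b ^+ 2 -> a <= b.
Proof. move=> hb h; case: (lerP a b) => // hab; nra. Qed.

Lemma sqrt_le (a c : R) : 0 <= c -> a <= c ^+ 2 -> Num.sqrt a <= c.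
Proof. move=> hc h; have := ler_wsqrtr h; rewrite sqrtr_sqr ger0_norm //. Qed.

Lemma le_sqrt (a c : R) : 0 <= c -> c ^+ 2 <= a -> c <= Num.sqrt a.
Proof. move=> hc h; have := ler_wsqrtr h; rewrite sqrtr_sqr ger0_norm //. Qed.

Implicit Types u v w : 'cV[R]_2.

Lemma norm2_ge0 u : 0 <= norm2 u. Proof. exact: sqrtr_ge0. Qed.

Lemma norm2_sq u : norm2 u ^+ 2 = u 0 0 ^+ 2 + u 1 0 ^+ 2.
Proof. rewrite /norm2 sqr_sqrtr //; nra. Qed.

Lemma norm2_le u c : 0 <= c -> u 0 0 ^+ 2 + u 1 0 ^+ 2 <= c ^+ 2 -> norm2 u <= c.
Proof. by move=> hc h; apply: sqrt_le. Qed.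

Lemma CS2 u v : `|dot2 u v| <= norm2 u * norm2 v.
Proof.
apply: le_sq; first by rewrite mulr_ge0 ?norm2_ge0.
rewrite real_normK ?num_real // exprMn !norm2_sq /dot2.
have := sqr_ge0 (u 0 0 * v 1 0 - u 1 0 * v 0 0); nra.
Qed.

Lemma CS2' u v : dot2 u v <= norm2 u * norm2 v.
Proof. exact: le_trans (ler_norm _) (CS2 u v). Qed.

Lemma norm2D u v : norm2 (u + v) <= norm2 u + norm2 v.
Proof.
apply: norm2_le; first by rewrite addr_ge0 ?norm2_ge0.
rewrite !mxE.
have := CS2' u v; have := norm2_sq u; have := norm2_sq v; rewrite /dot2 => h1 h2 h; nra.
Qed.

Lemma norm2N u : norm2 (- u) = norm2 u.
Proof. by rewrite /norm2 !mxE !sqrrN. Qed.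

Lemma norm2B_le u v : `|norm2 u - norm2 v| <= norm2 (u - v).
Proof.
rewrite ler_norml; apply/andP; split.
  have := norm2D (v - u) u; rewrite subrK -opprB norm2N; lra.
have := norm2D (u - v) v; rewrite subrK; lra.
Qed.

Lemma norm2Z (k : R) u : norm2 (k *: u) = `|k| * norm2 u.
Proof.
rewrite /norm2 !mxE -sqrtr_sqr -sqrtrM ?sqr_ge0 //; congr Num.sqrt; ring.
Qed.

Lemma perp2E u : perp2 u 0 0 = - u 1 0 /\ perp2 u 1 0 = u 0 0.
Proof. by rewrite /perp2 !mxE. Qed.

Lemma norm2_perp u : norm2 (perp2 u) = norm2 u.
Proof. rewrite /norm2; have [-> ->] := perp2E u; congr Num.sqrt; ring. Qed.

Lemma perp2B u v : perp2 (u - v) = perp2 u - perp2 v.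
Proof.
apply/matrixP => i j; rewrite !mxE; case: ifP => _; rewrite ?mxE //; ring.
Qed.

Lemma dot2BL u v w : dot2 (u - v) w = dot2 u w - dot2 v w.
Proof. rewrite /dot2 !mxE; ring. Qed.
Lemma dot2BR u v w : dot2 w (u - v) = dot2 w u - dot2 w v.
Proof. rewrite /dot2 !mxE; ring. Qed.
Lemma dot2ZL (k : R) u w : dot2 (k *: u) w = k * dot2 u w.
Proof. rewrite /dot2 !mxE; ring. Qed.

Lemma dot2C u v : dot2 u v = dot2 v u.
Proof. rewrite /dot2; ring. Qed.

Lemma dot_div_le (F : R) a b : 0 <= F -> norm2 a <= F -> `|dot2 a b / F| <= norm2 b.
Proof.
move=> F0 haF; have [->|Fn0] := eqVneq F 0; first by rewrite invr0 mulr0 normr0 norm2_ge0.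
have Fp : 0 < F by rewrite lt_def Fn0.
rewrite normrM normfV (gtr0_norm Fp) ler_pdivrMr //.
apply: le_trans (CS2 a b) _; rewrite mulrC ler_wpM2l ?norm2_ge0 //.
Qed.

Lemma lip_dot (a b a' b' : 'cV[R]_2) (F F' D : R) :
  0 <= F -> 0 <= F' -> norm2 a <= F -> norm2 b <= F -> norm2 a' <= F' -> norm2 b' <= F' ->
  `|F - F'| <= D -> norm2 (a - a') <= D -> norm2 (b - b') <= D ->
  `|dot2 a b / F - dot2 a' b' / F'| <= 3 * D.
Proof.
move=> F0 F'0 ha hb ha' hb' hF hda hdb.
have D0 : 0 <= D by apply: le_trans (norm2_ge0 _) hda.
have hbb := norm2B_le b b'.
have [FE|Fn0] := eqVneq F 0.
  rewrite FE invr0 mulr0 sub0r normrN.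
  apply: le_trans (dot_div_le b' F'0 ha') _.
  move: hbb hb; rewrite FE ler_norml; lra.
have [F'E|F'n0] := eqVneq F' 0.
  rewrite F'E invr0 mulr0 subr0.
  apply: le_trans (dot_div_le b F0 ha) _.
  move: hbb hb'; rewrite F'E ler_norml; lra.
have Fp : 0 < F by rewrite lt_def Fn0.
have F'p : 0 < F' by rewrite lt_def F'n0.
have -> : dot2 a b / F - dot2 a' b' / F' =
   dot2 a (b - b') / F + dot2 b' ((F' / F - 1) *: a + (a - a')) / F'.
  rewrite dot2BR !(dot2C b') /dot2 !mxE; field; rewrite ?Fn0 ?F'n0 //.
apply: le_trans (ler_normD _ _) _.
have h1 := dot_div_le (b - b') F0 ha.
have h2 := dot_div_le ((F' / F - 1) *: a + (a - a')) F'0 hb'.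
have h3 := norm2D ((F' / F - 1) *: a) (a - a').
have h4 : norm2 ((F' / F - 1) *: a) <= D.
  rewrite norm2Z (_ : F' / F - 1 = (F' - F) / F); last by field; rewrite Fn0.
  rewrite normrM normfV (gtr0_norm Fp) -mulrA mulrC -mulrA.
  have : norm2 a / F <= 1 by rewrite ler_pdivrMr // mul1r.
  have := normr_ge0 (F' - F); rewrite distrC in hF; move=> hn hr.
  have : 0 <= norm2 a / F by rewrite divr_ge0 ?norm2_ge0 // ltW.
  nra.
lra.
Qed.


Lemma normInf_ge0 k (v : 'rV[R]_k) : 0 <= normInf v.
Proof. rewrite /normInf; elim/big_ind: _ => //= a b ha hb; rewrite le_max ha //. Qed.

Lemma normInf_le k (v : 'rV[R]_k) B : 0 <= B -> (forall i, `|v 0 i| <= B) -> normInf v <= B.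
Proof. by move=> hB h; apply: bigmax_le. Qed.

Lemma normInf_ge k (v : 'rV[R]_k) i : `|v 0 i| <= normInf v.
Proof. exact: le_bigmax. Qed.

Lemma normInf_vec1 (a b : R) : normInf (vec1 a - vec1 b) = `|a - b|.
Proof.
rewrite /normInf big_ord_recl big_ord0 !mxE.
by rewrite (maxEle `|a - b|) normr_le0 ?normr_ge0; case: eqP => // ->; rewrite normr0.
Qed.

Lemma normInf_vec3_le (a b c a' b' c' B : R) :
  `|a - a'| <= B -> `|b - b'| <= B -> `|c - c'| <= B ->
  normInf (vec3 a b c - vec3 a' b' c') <= B.
Proof.
move=> ha hb hc; apply: normInf_le; first exact: le_trans (normr_ge0 _) ha.
by move=> i; rewrite !mxE; case: i => [[|[|[|]]]] //=.
Qed.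

Lemma normInf_vec3_ge (a b c a' b' c' : R) :
  [/\ `|a - a'| <= normInf (vec3 a b c - vec3 a' b' c'),
      `|b - b'| <= normInf (vec3 a b c - vec3 a' b' c') &
      `|c - c'| <= normInf (vec3 a b c - vec3 a' b' c')].
Proof.
split.
- by have := normInf_ge (vec3 a b c - vec3 a' b' c') (0 : 'I_3); rewrite !mxE.
- by have := normInf_ge (vec3 a b c - vec3 a' b' c') (1 : 'I_3); rewrite !mxE.
- by have := normInf_ge (vec3 a b c - vec3 a' b' c') (2 : 'I_3); rewrite !mxE.
Qed.

Lemma Winf_le N k (S S' : 'I_N -> 'rV[R]_k) (s : 'S_N) :
  Winf S S' <= \big[Num.max/0]_(i < N) normInf (S i - S' (s i)).
Proof. exact: bigmin_le. Qed.

Lemma Winf_leB N k (S S' : 'I_N -> 'rV[R]_k) (s : 'S_N) B :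
  0 <= B -> (forall i, normInf (S i - S' (s i)) <= B) -> Winf S S' <= B.
Proof. by move=> hB h; apply: le_trans (Winf_le S S' s) _; apply: bigmax_le. Qed.

Lemma Winf_ex N k (S S' : 'I_N -> 'rV[R]_k) :
  exists s : 'S_N, forall i, normInf (S i - S' (s i)) <= Winf S S'.
Proof.
rewrite /Winf.
set f := fun s : 'S_N => \big[Num.max/0]_(i < N) normInf (S i - S' (s i)).
have [s hs] : exists s, \big[Num.min/f 1%g]_(s0 : 'S_N) f s0 = f s.
  elim/big_ind: _; first by exists 1%g.
    move=> a b [s1 ->] [s2 ->]; rewrite /Num.min /Order.min.
    by case: ifP => _; [exists s1|exists s2].
  by move=> s _; exists s.
exists s => i; rewrite hs /f; exact: le_bigmax.
Qed.

Lemma Winf_ge0 N k (S S' : 'I_N -> 'rV[R]_k) : 0 <= Winf S S'.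
Proof.
rewrite /Winf; elim/big_ind: _ => //.
- exact: bigmax_ge_id.
- by move=> a b ha hb; rewrite le_min ha hb.
- move=> s _; exact: bigmax_ge_id.
Qed.


Definition L2 n (f : 'I_n -> R) := Num.sqrt (\sum_(j < n) f j ^+ 2).

Lemma sumsq_ge0 n (f : 'I_n -> R) : 0 <= \sum_(j < n) f j ^+ 2.
Proof. by apply: sumr_ge0 => j _; rewrite sqr_ge0. Qed.

Lemma L2_ge0 n (f : 'I_n -> R) : 0 <= L2 f.
Proof. exact: sqrtr_ge0. Qed.

Lemma L2_sq n (f : 'I_n -> R) : L2 f ^+ 2 = \sum_(j < n) f j ^+ 2.
Proof. by rewrite /L2 sqr_sqrtr // sumsq_ge0. Qed.

Lemma L2_mono n (f g : 'I_n -> R) : (forall j, `|f j| <= g j) -> L2 f <= L2 g.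
Proof.
move=> h; apply: ler_wsqrtr; apply: ler_sum => j _.
have := h j; have := normr_ge0 (f j); rewrite -[f j ^+ 2]real_normK ?num_real //; nra.
Qed.

Lemma sum_expand n (b c : R) (f g : 'I_n -> R) :
  \sum_(j < n) (b * f j - c * g j) ^+ 2 =
  b ^+ 2 * \sum_(j < n) f j ^+ 2 - 2 * b * c * \sum_(j < n) f j * g j + c ^+ 2 * \sum_(j < n) g j ^+ 2.
Proof.
rewrite !mulr_sumr -sumrB -big_split /=; apply: eq_bigr => j _; ring.
Qed.

Lemma CSsq n (f g : 'I_n -> R) :
  (\sum_(j < n) f j * g j) ^+ 2 <= (\sum_(j < n) f j ^+ 2) * (\sum_(j < n) g j ^+ 2).
Proof.
set A := \sum_(j < n) f j ^+ 2; set B := \sum_(j < n) g j ^+ 2; set C := \sum_(j < n) f j * g j.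
have B0 : 0 <= B by apply: sumsq_ge0.
have [BE|Bn0] := eqVneq B 0.
  have g0 : forall j, g j = 0.
    move=> j; apply/eqP; rewrite -sqrf_eq0; apply/eqP.
    by move: BE; rewrite /B => /psumr_eq0P -> // i _; rewrite sqr_ge0.
  rewrite BE mulr0 /C big1 ?expr0n // => j _; by rewrite g0 mulr0.
have Bp : 0 < B by rewrite lt_def Bn0.
have : 0 <= \sum_(j < n) (B * f j - C * g j) ^+ 2 by apply: sumsq_ge0.
rewrite sum_expand -/A -/B -/C => h.
have : 0 <= B * (A * B - C ^+ 2) by nra.
by rewrite pmulr_rge0 // subr_ge0 mulrC.
Qed.

Lemma CSsum n (f g : 'I_n -> R) : \sum_(j < n) f j * g j <= L2 f * L2 g.
Proof.
apply: le_trans (ler_norm _) _.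
rewrite -sqrtr_sqr /L2 -sqrtrM ?sumsq_ge0 //.
by apply: ler_wsqrtr; apply: CSsq.
Qed.

Lemma L2D n (f g : 'I_n -> R) : L2 (fun j => f j + g j) <= L2 f + L2 g.
Proof.
apply: sqrt_le; first by rewrite addr_ge0 ?L2_ge0.
have -> : \sum_(j < n) (f j + g j) ^+ 2 =
   \sum_(j < n) f j ^+ 2 + 2 * \sum_(j < n) f j * g j + \sum_(j < n) g j ^+ 2.
  rewrite mulr_sumr -!big_split /=; apply: eq_bigr => j _; ring.
have := CSsum f g; rewrite -(L2_sq f) -(L2_sq g); nra.
Qed.

Lemma L2_const n (f : 'I_n -> R) c : 0 <= c -> (forall j, `|f j| <= c) -> L2 f <= n%:R * c.
Proof.
move=> c0 h; apply: sqrt_le; first by rewrite mulr_ge0 ?ler0n.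
apply: le_trans (_ : \sum_(j < n) c ^+ 2 <= _).
  apply: ler_sum => j _; have := h j; have := normr_ge0 (f j).
  rewrite -[f j ^+ 2]real_normK ?num_real //; nra.
rewrite sumr_const card_ord -mulr_natl exprMn.
have : (n%:R : R) <= n%:R ^+ 2.
  rewrite -natrX ler_nat; case: n {f h} => // n; rewrite expnS leq_pmulr // expn_gt0.
have := sqr_ge0 c; nra.
Qed.

Lemma L2_perm n (f : 'I_n -> R) (s : 'S_n) : L2 (fun j => f (s j)) = L2 f.
Proof. by rewrite /L2 [in RHS](reindex_inj (@perm_inj _ s)). Qed.


End Aux.


Section Aux2.
Variable R : realType.
Lemma lift01 : lift (ord0 : 'I_2) (ord0 : 'I_1) = 1.
Proof. by apply/val_inj. Qed.

Lemma mulQE (Q : 'M[R]_2) (v : 'cV[R]_2) k : (Q *m v) k 0 = Q k 0 * v 0 0 + Q k 1 * v 1 0.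
Proof. by rewrite mxE !big_ord_recl big_ord0 addr0 lift01. Qed.

Lemma SO2E (Q : 'M[R]_2) : SO2 Q -> [/\ Q 1 1 = Q 0 0, Q 1 0 = - Q 0 1 & Q 0 0 ^+ 2 + Q 0 1 ^+ 2 = 1].
Proof.
case=> hQ hd; rewrite det22 in hd.
have e00 := congr1 (fun M : 'M[R]_2 => M 0 0) hQ.
have e11 := congr1 (fun M : 'M[R]_2 => M 1 1) hQ.
have e01 := congr1 (fun M : 'M[R]_2 => M 0 1) hQ.
move: e00 e11 e01; rewrite /= !mxE !big_ord_recl big_ord0 !mxE /= !lift01 => e00 e11 e01.
rewrite ?big_ord0 ?addr0 in e00 e11 e01.
have E00 : Q 0 0 * Q 0 0 + Q 0 1 * Q 0 1 = 1 by exact: e00.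
have E11 : Q 1 0 * Q 1 0 + Q 1 1 * Q 1 1 = 1 by exact: e11.
have E01 : Q 0 0 * Q 1 0 + Q 0 1 * Q 1 1 = 0 by exact: e01.
clear e00 e11 e01.
have h : (Q 0 0 - Q 1 1) ^+ 2 + (Q 0 1 + Q 1 0) ^+ 2 = 0.
  have -> : (Q 0 0 - Q 1 1) ^+ 2 + (Q 0 1 + Q 1 0) ^+ 2 =
    (Q 0 0 * Q 0 0 + Q 0 1 * Q 0 1) + (Q 1 0 * Q 1 0 + Q 1 1 * Q 1 1)
     - 2 * (Q 0 0 * Q 1 1 - Q 0 1 * Q 1 0) by ring.
  rewrite E00 E11 hd; ring.
have h1 := sqr_ge0 (Q 0 0 - Q 1 1); have h2 := sqr_ge0 (Q 0 1 + Q 1 0).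
have a1 : (Q 0 0 - Q 1 1) ^+ 2 = 0 by lra.
have a2 : (Q 0 1 + Q 1 0) ^+ 2 = 0 by lra.
move/eqP: a1; rewrite sqrf_eq0 subr_eq0 => /eqP a1.
move/eqP: a2; rewrite sqrf_eq0 addr_eq0 => /eqP a2.
split; [by [] | by rewrite a2 opprK | by rewrite !expr2].
Qed.


Lemma rot_dot (Q : 'M[R]_2) u v : SO2 Q -> dot2 (Q *m u) (Q *m v) = dot2 u v.
Proof.
case/SO2E => e1 e2 E; rewrite /dot2 !mulQE e1 e2 -[RHS]mul1r -E; ring.
Qed.

Lemma rot_norm (Q : 'M[R]_2) u : SO2 Q -> norm2 (Q *m u) = norm2 u.
Proof.
case/SO2E => e1 e2 E; rewrite /norm2 !mulQE e1 e2; congr Num.sqrt.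
rewrite -[RHS]mul1r -E; ring.
Qed.

Lemma rot_perp (Q : 'M[R]_2) u v : SO2 Q -> dot2 (perp2 (Q *m u)) (Q *m v) = dot2 (perp2 u) v.
Proof.
case/SO2E => e1 e2 E; rewrite /dot2; have [-> ->] := perp2E (Q *m u).
have [-> ->] := perp2E u; rewrite !mulQE e1 e2 -[RHS]mul1r -E; ring.
Qed.

End Aux2.


Section Aux3.
Variable R : realType.

Lemma L2_ge_term n (f : 'I_n -> R) j : `|f j| <= L2 f.
Proof.
apply: le_sqrt; first exact: normr_ge0.
rewrite real_normK ?num_real // (bigD1 j) //= lerDl.
by apply: sumr_ge0 => i _; rewrite sqr_ge0.
Qed.

Lemma frobE n (M : 'M[R]_(2, n)) : frob M = L2 (fun j => norm2 (col j M)).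
Proof.
rewrite /frob /L2; congr Num.sqrt.
rewrite big_ord_recl big_ord_recl big_ord0 addr0 -big_split /=.
apply: eq_bigr => j _; rewrite norm2_sq !mxE lift01 //.
Qed.

Lemma norm2_col_le n (M : 'M[R]_(2, n)) j : norm2 (col j M) <= frob M.
Proof. by rewrite frobE; have := L2_ge_term (fun j => norm2 (col j M)) j; rewrite ger0_norm ?norm2_ge0. Qed.

Definition mean n (X : 'M[R]_(2, n)) (k : 'I_2) := (\sum_(l < n) X k l) / n%:R.

Lemma centralizeE n (X : 'M[R]_(2, n)) k j : centralize X k j = X k j - mean X k.
Proof. by rewrite /centralize mxE. Qed.

Lemma sum_centralize n (X : 'M[R]_(2, n)) k : (0 < n)%N -> \sum_(j < n) centralize X k j = 0.
Proof.
move=> n0; rewrite (eq_bigr _ (fun j _ => centralizeE X k j)) sumrB sumr_const card_ord.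
have nz : n%:R != 0 :> R by rewrite pnatr_eq0 -lt0n.
by rewrite /mean -[X in _ - X]mulr_natr -mulrA mulVf // mulr1 subrr.
Qed.

Lemma sum_shift n (w0 w1 : 'I_n -> R) (c0 c1 : R) :
  \sum_(j < n) w0 j = 0 -> \sum_(j < n) w1 j = 0 ->
  \sum_(j < n) (w0 j ^+ 2 + w1 j ^+ 2) <= \sum_(j < n) ((w0 j + c0) ^+ 2 + (w1 j + c1) ^+ 2).
Proof.
move=> h0 h1; rewrite -subr_ge0 -sumrB.
have -> : \sum_(j < n) (((w0 j + c0) ^+ 2 + (w1 j + c1) ^+ 2) - (w0 j ^+ 2 + w1 j ^+ 2)) =
   (2 * c0) * \sum_(j < n) w0 j + (2 * c1) * \sum_(j < n) w1 j + \sum_(j < n) (c0 ^+ 2 + c1 ^+ 2).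
  rewrite !mulr_sumr -!big_split /=; apply: eq_bigr => j _; ring.
rewrite h0 h1 !mulr0 !add0r; apply: sumr_ge0 => j _; rewrite addr_ge0 ?sqr_ge0 //.
Qed.

Definition cst n (X Y : 'M[R]_(2, n)) (Q : 'M[R]_2) (t : 'cV[R]_2) (k : 'I_2) :=
  mean X k - (Q k 0 * mean Y 0 + Q k 1 * mean Y 1) + t k 0.

Lemma vE n (X Y : 'M[R]_(2, n)) (s : 'S_n) (Q : 'M[R]_2) (t : 'cV[R]_2) j k :
  (col j X - Q *m col (s j) Y + t) k 0 =
  (col j (centralize X) - Q *m col (s j) (centralize Y)) k 0 + cst X Y Q t k.
Proof.
rewrite !mxE !big_ord_recl !big_ord0 !mxE !lift01 /cst /mean; ring.
Qed.


Lemma sum_w n (X Y : 'M[R]_(2, n)) (s : 'S_n) (Q : 'M[R]_2) k : (0 < n)%N ->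
  \sum_(j < n) (col j (centralize X) - Q *m col (s j) (centralize Y)) k 0 = 0.
Proof.
move=> n0.
rewrite (eq_bigr (fun j => centralize X k j - (Q k 0 * centralize Y 0 (s j) + Q k 1 * centralize Y 1 (s j)))); last first.
  by move=> j _; rewrite !mxE !big_ord_recl !big_ord0 !mxE !lift01 addr0.
rewrite sumrB big_split /= -!mulr_sumr.
have e : forall k', \sum_(j < n) centralize Y k' (s j) = 0.
  by move=> k'; rewrite -{2}(sum_centralize Y k' n0) [in RHS](reindex_inj (@perm_inj _ s)).
by rewrite !e !sum_centralize // !mulr0 addr0 subrr.
Qed.

Definition dterm n (X Y : 'M[R]_(2, n)) (s : 'S_n) (Q : 'M[R]_2) (t : 'cV[R]_2) :=
  Num.sqrt (\sum_(j < n)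
           (let v := col j X - Q *m col (s j) Y + t in v 0 0 ^+ 2 + v 1 0 ^+ 2)).

Definition Dc n (X Y : 'M[R]_(2, n)) (s : 'S_n) (Q : 'M[R]_2) :=
  L2 (fun j => norm2 (col j (centralize X) - Q *m col (s j) (centralize Y))).

Lemma Dc_le n (X Y : 'M[R]_(2, n)) s Q t : (0 < n)%N -> Dc X Y s Q <= dterm X Y s Q t.
Proof.
move=> n0; apply: ler_wsqrtr.
rewrite (eq_bigr (fun j => (col j (centralize X) - Q *m col (s j) (centralize Y)) 0 0 ^+ 2 +
                           (col j (centralize X) - Q *m col (s j) (centralize Y)) 1 0 ^+ 2)); last first.
  by move=> j _; rewrite norm2_sq.
rewrite [X in _ <= X](eq_bigr (fun j => ((col j (centralize X) - Q *m col (s j) (centralize Y)) 0 0 + cst X Y Q t 0) ^+ 2 +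
                           ((col j (centralize X) - Q *m col (s j) (centralize Y)) 1 0 + cst X Y Q t 1) ^+ 2)); last first.
  by move=> j _; rewrite /= !vE.
by apply: sum_shift; apply: sum_w.
Qed.

Definition t0 n (X Y : 'M[R]_(2, n)) (Q : 'M[R]_2) : 'cV[R]_2 :=
  \col_(k < 2) ((Q k 0 * mean Y 0 + Q k 1 * mean Y 1) - mean X k).

Lemma Dc_eq n (X Y : 'M[R]_(2, n)) s Q : dterm X Y s Q (t0 X Y Q) = Dc X Y s Q.
Proof.
rewrite /dterm /Dc /L2; congr Num.sqrt; apply: eq_bigr => j _.
rewrite norm2_sq /= !vE /cst /t0 !mxE; congr (_ ^+ 2 + _ ^+ 2); ring.
Qed.

Lemma SO2_1 : SO2 (1%:M : 'M[R]_2).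
Proof. by split; rewrite ?mul1mx ?trmx1 ?det1. Qed.

Lemma dG_le n (X Y : 'M[R]_(2, n)) s Q : SO2 Q -> dGplus X Y <= Dc X Y s Q.
Proof.
move=> hQ; rewrite -Dc_eq; apply: ge_inf.
  by exists 0 => r [s' [Q' [t' [_ ->]]]]; apply: sqrtr_ge0.
by exists s, Q, (t0 X Y Q).
Qed.

Lemma dG_ge n (X Y : 'M[R]_(2, n)) (A b : R) : 0 < b ->
  (forall s Q t, SO2 Q -> A <= b * dterm X Y s Q t) -> A <= b * dGplus X Y.
Proof.
move=> b0 h; rewrite mulrC -ler_pdivrMr //; apply: lb_le_inf.
  by exists (dterm X Y 1%g 1%:M 0), 1%g, 1%:M, 0; split => //; exact: SO2_1.
move=> r [s [Q [t [hQ ->]]]]; rewrite ler_pdivrMr // mulrC; exact: h.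
Qed.

End Aux3.


Section Aux4.
Variable R : realType.

Lemma L2_dist n (a b : 'I_n -> 'cV[R]_2) :
  `|L2 (fun j => norm2 (a j)) - L2 (fun j => norm2 (b j))| <= L2 (fun j => norm2 (a j - b j)).
Proof.
have key : forall a b : 'I_n -> 'cV[R]_2,
    L2 (fun j => norm2 (a j)) <= L2 (fun j => norm2 (a j - b j)) + L2 (fun j => norm2 (b j)).
  move=> a' b'; apply: le_trans (L2D _ _).
  apply: L2_mono => j; rewrite ger0_norm ?norm2_ge0 //.
  by have := norm2D (a' j - b' j) (b' j); rewrite subrK.
rewrite ler_norml; apply/andP; split.
  have := key b a.
  have -> : L2 (fun j => norm2 (b j - a j)) = L2 (fun j => norm2 (a j - b j)).
    by congr L2; apply: funext => j; rewrite -opprB norm2N.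
  lra.
have := key a b; lra.
Qed.

Lemma sig_ex n (s : 'S_n) (i : 'I_n) :
  {sg : 'S_n.-1 | forall j, lift (s i) (sg j) = s (lift i j)}.
Proof.
have ne : forall j, s i != s (lift i j).
  by move=> j; rewrite (inj_eq perm_inj) neq_lift.
pose f j := sval (unlift_some (ne j)).
have fE : forall j, lift (s i) (f j) = s (lift i j).
  by move=> j; rewrite /f; case: (unlift_some (ne j)) => k /= -> _.
have finj : injective f.
  by move=> j1 j2 e; apply: (@lift_inj _ i); apply: (@perm_inj _ s); rewrite -!fE e.
by exists (perm finj) => j; rewrite permE fE.
Qed.

End Aux4.

Section Main.
Variables (R : realType) (n d m : nat).
Variable psi : 'rV[R]_1 -> ('I_n.-1 -> 'rV[R]_3) -> 'rV[R]_d.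
Variable phi : ('I_n -> 'rV[R]_d) -> 'rV[R]_m.

Definition inner (Xb : 'M[R]_(2, n)) (i : 'I_n) (j : 'I_n.-1) : 'rV[R]_3 :=
  vec3 (dot2 (col i Xb) (col (lift i j) Xb) / frob Xb)
       (dot2 (perp2 (col i Xb)) (col (lift i j) Xb) / frob Xb)
       (norm2 (col (lift i j) Xb)).

Definition feat (Xb : 'M[R]_(2, n)) (i : 'I_n) : 'rV[R]_d :=
  psi (vec1 (norm2 (col i Xb))) (inner Xb i).

Lemma psi0 : psi_homogeneous psi -> psi 0 (fun _ => 0) = 0.
Proof.
move=> h; have h2 : (0:R) < 2 by lra.
have := h 2 0 (fun _ => 0) h2.
have -> : (fun i : 'I_n.-1 => 2 *: (0 : 'rV[R]_3)) = (fun _ => 0).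
  by apply: funext => i; rewrite scaler0.
rewrite scaler0 => E.
have : (2 - 1 : R) *: psi 0 (fun _ => 0) = 0 by rewrite scalerBl -E scale1r subrr.
by rewrite (_ : 2 - 1 = 1 :> R) ?scale1r //; ring.
Qed.

Lemma phi0 : phi_homogeneous phi -> phi (fun _ => 0) = 0.
Proof.
move=> h; have h2 : (0:R) < 2 by lra.
have := h 2 (fun _ => 0) h2.
have -> : (fun i : 'I_n => 2 *: (0 : 'rV[R]_d)) = (fun _ => 0).
  by apply: funext => i; rewrite scaler0.
move=> E.
have : (2 - 1 : R) *: phi (fun _ => 0) = 0 by rewrite scalerBl -E scale1r subrr.
by rewrite (_ : 2 - 1 = 1 :> R) ?scale1r //; ring.
Qed.

Lemma HmapE X : psi_homogeneous psi -> phi_homogeneous phi ->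
  Hmap psi phi X = phi (feat (centralize X)).
Proof.
move=> hps hph; rewrite /Hmap; case: eqP => // E; rewrite E.
have -> : feat 0 = fun _ => 0; last by rewrite phi0.
apply: funext => i; rewrite /feat.
have n0 : norm2 (col i (0 : 'M[R]_(2, n))) = 0.
  by rewrite col0 /norm2 !mxE expr0n /= addr0 sqrtr0.
have -> : vec1 (norm2 (col i (0 : 'M[R]_(2, n)))) = 0.
  by apply/matrixP => a b; rewrite n0 !mxE.
have -> : inner 0 i = fun _ => 0; last by rewrite psi0.
apply: funext => j; rewrite /inner /dot2 /norm2 !col0 /perp2 !mxE.
apply/matrixP => a b; rewrite !mxE.
by rewrite !mul0r !mulr0 ?oppr0 !addr0 expr0n /= addr0 sqrtr0 !mul0r; case: ifP => //; case: ifP.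
Qed.


Lemma feat_upper (Cps : R) X Y (s : 'S_n) (Q : 'M[R]_2) :
  (forall v v' S S', normInf (psi v S - psi v' S') <= Cps * Num.max (normInf (v - v')) (Winf S S')) ->
  0 <= Cps -> SO2 Q -> forall i,
  normInf (feat (centralize X) i - feat (centralize Y) (s i)) <= Cps * (3 * Dc X Y s Q).
Proof.
move=> hps C0 hQ i; apply: le_trans (hps _ _ _ _) _; apply: ler_wpM2l => //.
set x := fun j => col j (centralize X).
set y' := fun j => Q *m col (s j) (centralize Y).
have D0 : 0 <= Dc X Y s Q by apply: L2_ge0.
have hD : forall j, norm2 (x j - y' j) <= Dc X Y s Q.
  move=> j; have := L2_ge_term (fun j => norm2 (x j - y' j)) j.
  by rewrite ger0_norm ?norm2_ge0.
have nF : forall j, norm2 (x j) <= frob (centralize X) by move=> j; apply: norm2_col_le.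
have nF' : forall j, norm2 (y' j) <= frob (centralize Y).
  by move=> j; rewrite /y' rot_norm //; apply: norm2_col_le.
have hF : `|frob (centralize X) - frob (centralize Y)| <= Dc X Y s Q.
  rewrite !frobE -(L2_perm (fun j => norm2 (col j (centralize Y))) s).
  have := L2_dist x y'.
  have -> : L2 (fun j => norm2 (y' j)) = L2 (fun j => norm2 (col (s j) (centralize Y))).
    by congr L2; apply: funext => j; rewrite /y' rot_norm.
  by [].
have F0 : 0 <= frob (centralize X) by apply: sqrtr_ge0.
have F'0 : 0 <= frob (centralize Y) by apply: sqrtr_ge0.
have hnorm : forall j, `|norm2 (x j) - norm2 (col (s j) (centralize Y))| <= Dc X Y s Q.
  move=> j; rewrite -(@rot_norm _ Q (col (s j) (centralize Y)) hQ); exact: le_trans (norm2B_le _ _) (hD j).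
rewrite ge_max; apply/andP; split.
  rewrite normInf_vec1; apply: le_trans (hnorm i) _; lra.
have [sg hsg] := sig_ex s i.
apply: (Winf_leB (s := sg)); first lra.
move=> j; rewrite /inner hsg; apply: normInf_vec3_le.
- rewrite -(@rot_dot _ Q (col (s i) (centralize Y)) (col (s (lift i j)) (centralize Y)) hQ).
  apply: lip_dot => //; first [exact: nF | exact: nF' | exact: (hD i) | exact: (hD (lift i j))].
- rewrite -(@rot_perp _ Q (col (s i) (centralize Y)) (col (s (lift i j)) (centralize Y)) hQ).
  apply: lip_dot => //; rewrite ?norm2_perp -?perp2B ?norm2_perp;
    first [exact: nF | exact: nF' | exact: (hD i) | exact: (hD (lift i j))].
- apply: le_trans (hnorm (lift i j)) _; lra.
Qed.

End Main.


Section Aux5.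
Variable R : realType.

Lemma core_bound (F F' N M a a' dl nn : R) :
  0 < N -> 0 < M -> 0 <= F -> F <= nn * N -> `|a - a'| <= dl -> `|a'| <= M ->
  `|M - N| <= dl -> `|F - F'| <= nn * dl -> 0 <= dl -> 1 <= nn ->
  `|F * a - N / M * (F' * a')| <= 3 * nn * N * dl.
Proof.
move=> N0 M0 F0 FN ha ha' hMN hF d0 n1.
have -> : F * a - N / M * (F' * a') = F * (a - a') + (F * (M - N) + N * (F - F')) * (a' / M).
  by field; rewrite gt_eqF.
apply: le_trans (ler_normD _ _) _.
have h1 : F * `|a - a'| <= nn * N * dl.
  apply: le_trans (_ : F * dl <= _); first by rewrite ler_wpM2l.
  by rewrite ler_wpM2r.
have h2 : `|a' / M| <= 1 by rewrite normrM normfV (gtr0_norm M0) ler_pdivrMr // mul1r.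
have h3 : `|F * (M - N) + N * (F - F')| <= 2 * nn * N * dl.
  apply: le_trans (ler_normD _ _) _; rewrite !normrM (ger0_norm F0) (gtr0_norm N0).
  have : F * `|M - N| <= nn * N * dl.
    apply: le_trans (_ : F * dl <= _); first by rewrite ler_wpM2l.
    by rewrite ler_wpM2r.
  have : N * `|F - F'| <= N * (nn * dl) by rewrite ler_wpM2l // ltW.
  lra.
have h4 : `|F * (M - N) + N * (F - F')| * `|a' / M| <= 2 * nn * N * dl.
  apply: le_trans (_ : `|F * (M - N) + N * (F - F')| * 1 <= _); last by rewrite mulr1.
  by rewrite ler_wpM2l.
rewrite normrM [`|_ * (a' / M)|]normrM (ger0_norm F0); lra.
Qed.


Lemma lagrange (x v : 'cV[R]_2) :
  norm2 x ^+ 2 * norm2 v ^+ 2 = dot2 x v ^+ 2 + dot2 (perp2 x) v ^+ 2.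
Proof. rewrite !norm2_sq /dot2; have [-> ->] := perp2E x; ring. Qed.

Lemma rot_ex (x y : 'cV[R]_2) : 0 < norm2 x -> 0 < norm2 y ->
  exists Q : 'M[R]_2, [/\ SO2 Q,
    (forall z, dot2 x (Q *m z) = norm2 x / norm2 y * dot2 y z) &
    (forall z, dot2 (perp2 x) (Q *m z) = norm2 x / norm2 y * dot2 (perp2 y) z)].
Proof.
move=> N0 M0; set N := norm2 x; set M := norm2 y.
have hN : x 0 0 ^+ 2 + x 1 0 ^+ 2 = N ^+ 2 by rewrite norm2_sq.
have hM : y 0 0 ^+ 2 + y 1 0 ^+ 2 = M ^+ 2 by rewrite norm2_sq.
have Nn : N != 0 by rewrite gt_eqF.
have Mn : M != 0 by rewrite gt_eqF.
set c := (x 0 0 * y 0 0 + x 1 0 * y 1 0) / (N * M).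
set sn := (x 1 0 * y 0 0 - x 0 0 * y 1 0) / (N * M).
pose Q : 'M[R]_2 := \matrix_(a < 2, b < 2)
  (if a == 0 then (if b == 0 then c else - sn) else (if b == 0 then sn else c)).
have Q00 : Q 0 0 = c by rewrite mxE.
have Q01 : Q 0 1 = - sn by rewrite mxE.
have Q10 : Q 1 0 = sn by rewrite mxE.
have Q11 : Q 1 1 = c by rewrite mxE.
have cs : c ^+ 2 + sn ^+ 2 = 1.
  rewrite /c /sn.
  have -> : ((x 0 0 * y 0 0 + x 1 0 * y 1 0) / (N * M)) ^+ 2 +
            ((x 1 0 * y 0 0 - x 0 0 * y 1 0) / (N * M)) ^+ 2 =
            ((x 0 0 ^+ 2 + x 1 0 ^+ 2) * (y 0 0 ^+ 2 + y 1 0 ^+ 2)) / (N * M) ^+ 2.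
    by field; rewrite Nn Mn.
  by rewrite hN hM -exprMn divff // expf_neq0 // mulf_neq0.
exists Q; split.
- split.
    apply/matrixP => a b; rewrite !mxE !big_ord_recl big_ord0 !mxE !lift01.
    have Q00' : Q 0 ord0 = c by rewrite mxE.
    have Q10' : Q 1 ord0 = sn by rewrite mxE.
    have i2 : forall a : 'I_2, a = 0 \/ a = 1.
      by case=> [[|[|]]] // ?; [left|right]; apply/val_inj.
    have e10 : ((1 : 'I_2) == 0) = false by [].
    have e00 : ((ord0 : 'I_2) == 0) = true by [].
    have e01 : ((0 : 'I_2) == 1) = false by [].
    have e11 : ((1 : 'I_2) == 1) = true by [].
    case: (i2 a) => ->; case: (i2 b) => ->; rewrite ?e10 ?e00 ?e01 ?e11 ?eqxx /=;
      rewrite -?cs; ring.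
  by rewrite det22 Q00 Q01 Q10 Q11 mulNr opprK -!expr2.
- move=> z; rewrite /dot2 !mulQE Q00 Q01 Q10 Q11 /c /sn.
  have -> : x 0 0 * ((x 0 0 * y 0 0 + x 1 0 * y 1 0) / (N * M) * z 0 0 +
       - ((x 1 0 * y 0 0 - x 0 0 * y 1 0) / (N * M)) * z 1 0) +
     x 1 0 * ((x 1 0 * y 0 0 - x 0 0 * y 1 0) / (N * M) * z 0 0 +
       (x 0 0 * y 0 0 + x 1 0 * y 1 0) / (N * M) * z 1 0) =
     (x 0 0 ^+ 2 + x 1 0 ^+ 2) * (y 0 0 * z 0 0 + y 1 0 * z 1 0) / (N * M).
    by field; rewrite Nn Mn.
  by rewrite hN; field; rewrite Nn Mn.
- move=> z; rewrite /dot2; have [-> ->] := perp2E x; have [-> ->] := perp2E y.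
  rewrite !mulQE Q00 Q01 Q10 Q11 /c /sn.
  have -> : - x 1 0 * ((x 0 0 * y 0 0 + x 1 0 * y 1 0) / (N * M) * z 0 0 +
       - ((x 1 0 * y 0 0 - x 0 0 * y 1 0) / (N * M)) * z 1 0) +
     x 0 0 * ((x 1 0 * y 0 0 - x 0 0 * y 1 0) / (N * M) * z 0 0 +
       (x 0 0 * y 0 0 + x 1 0 * y 1 0) / (N * M) * z 1 0) =
     (x 0 0 ^+ 2 + x 1 0 ^+ 2) * (- y 1 0 * z 0 0 + y 0 0 * z 1 0) / (N * M).
    by field; rewrite Nn Mn.
  by rewrite hN; field; rewrite Nn Mn.
Qed.


Lemma L2_dist_s n (f g : 'I_n -> R) : `|L2 f - L2 g| <= L2 (fun j => f j - g j).
Proof.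
have key : forall f g : 'I_n -> R, L2 f <= L2 (fun j => f j - g j) + L2 g.
  move=> f' g'; apply: le_trans (L2D _ _).
  by rewrite le_eqVlt; apply/orP; left; apply/eqP; congr L2; apply: funext => j; rewrite subrK.
rewrite ler_norml; apply/andP; split; last by have := key f g; lra.
have := key g f.
have -> : L2 (fun j => g j - f j) = L2 (fun j => f j - g j).
  by rewrite /L2; congr Num.sqrt; apply: eq_bigr => j _; rewrite -opprB sqrrN.
lra.
Qed.

Lemma sq_le_of_abs (a b : R) : `|a| <= b -> a ^+ 2 <= b ^+ 2.
Proof. move=> h; rewrite -real_normK ?num_real //; have := normr_ge0 a; nra. Qed.

Lemma lower_core n (x y : 'I_n -> 'cV[R]_2) (dl : R) (tau s : 'S_n) (i0 : 'I_n) :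
  (0 < n)%N -> 0 <= dl ->
  (forall i, `|norm2 (x i) - norm2 (y (tau i))| <= dl) ->
  (forall i, norm2 (x i) <= norm2 (x i0)) ->
  s i0 = tau i0 ->
  (forall j, j != i0 -> `|dot2 (x i0) (x j) / L2 (fun l => norm2 (x l)) -
                          dot2 (y (s i0)) (y (s j)) / L2 (fun l => norm2 (y l))| <= dl) ->
  (forall j, j != i0 -> `|dot2 (perp2 (x i0)) (x j) / L2 (fun l => norm2 (x l)) -
                          dot2 (perp2 (y (s i0))) (y (s j)) / L2 (fun l => norm2 (y l))| <= dl) ->
  exists Q, SO2 Q /\ L2 (fun j => norm2 (x j - Q *m y (s j))) <= 5 * n%:R ^+ 2 * dl.
Proof.
move=> n0 d0 htau hmax hs hdot hperp.
set F := L2 (fun l => norm2 (x l)); set F' := L2 (fun l => norm2 (y l)).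
set N := norm2 (x i0); set nn : R := n%:R.
have n1 : 1 <= nn by rewrite /nn ler1n.
have hFF : `|F - F'| <= nn * dl.
  rewrite /F' -(L2_perm _ tau); apply: le_trans (L2_dist_s _ _) _.
  by apply: L2_const.
have NF : N <= F by have := L2_ge_term (fun l => norm2 (x l)) i0; rewrite ger0_norm ?norm2_ge0.
have FN : F <= nn * N by apply: L2_const; [exact: norm2_ge0 | move=> j; rewrite ger0_norm ?norm2_ge0].
have ny : forall l, norm2 (y l) <= N + dl.
  move=> l; have := htau (tau^-1 l)%g; rewrite permKV; have := hmax (tau^-1 l)%g.
  rewrite ler_distl => h1 /andP[h2 h3]; rewrite /N; lra.
have F0 : 0 <= F by apply: L2_ge0.
case: (lerP N dl) => hNd.
  exists 1%:M; split; first exact: SO2_1.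
  apply: le_trans (_ : L2 _ <= nn * (3 * dl)) _; last first.
    have : nn <= nn ^+ 2 by rewrite expr2 ler_peMl // (le_trans ler01).
    have : 0 <= nn by apply: le_trans n1; exact: ler01.
    nra.
  apply: L2_const; first lra.
  move=> j; rewrite ger0_norm ?norm2_ge0 // mul1mx.
  apply: le_trans (norm2D _ _) _; rewrite norm2N.
  have := hmax j; have := ny (s j); rewrite -/N; lra.
set M := norm2 (y (s i0)).
have hMN : `|M - N| <= dl by rewrite distrC /M hs; exact: htau.
have N0 : 0 < N by apply: le_lt_trans hNd.
have M0 : 0 < M by move: hMN; rewrite ler_distl => /andP[h1 h2]; lra.
have F'0 : 0 <= F' by apply: L2_ge0.
have MF' : M <= F' by have := L2_ge_term (fun l => norm2 (y l)) (s i0); rewrite ger0_norm ?norm2_ge0.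
have Fp : 0 < F by apply: lt_le_trans NF.
have F'p : 0 < F' by apply: lt_le_trans MF'.
have [Q [hQ hQ1 hQ2]] := rot_ex N0 M0.
exists Q; split => //.
apply: le_trans (_ : L2 _ <= nn * (5 * nn * dl)) _; last by rewrite le_eqVlt; apply/orP; left; apply/eqP; ring.
apply: L2_const; first by rewrite !mulr_ge0 ?ler0n.
move=> j; rewrite ger0_norm ?norm2_ge0 //.
apply: le_sq; first by rewrite !mulr_ge0 ?ler0n.
have L := lagrange (x i0) (x j - Q *m y (s j)).
rewrite dot2BR [dot2 (perp2 _) _]dot2BR hQ1 hQ2 -/N -/M in L.
have N2 : 0 < N ^+ 2 by rewrite exprn_gt0.
rewrite -(ler_pM2l N2) L.
have [->|jn] := eqVneq j i0.
  have e1 : dot2 (x i0) (x i0) = N ^+ 2 by rewrite /N norm2_sq /dot2 !expr2.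
  have e2 : dot2 (y (s i0)) (y (s i0)) = M ^+ 2 by rewrite /M norm2_sq /dot2 !expr2.
  have e3 : forall u : 'cV[R]_2, dot2 (perp2 u) u = 0.
    by move=> u; rewrite /dot2; have [-> ->] := perp2E u; ring.
  rewrite e1 e2 !e3 (_ : N ^+ 2 - N / M * M ^+ 2 = N * (N - M)); last by field; rewrite gt_eqF.
  rewrite mulr0 subr0 expr0n /= addr0 exprMn ler_pM2l //.
  apply: le_trans (_ : dl ^+ 2 <= _).
    by apply: sq_le_of_abs; rewrite distrC.
  apply: sq_le_of_abs; rewrite ger0_norm // -[X in X <= _]mul1r ler_wpM2r //.
  by apply: le_trans n1 _; rewrite -[X in X <= _]mul1r ler_wpM2r // ?(le_trans ler01 n1) //; lra.
have hz : norm2 (y (s j)) <= F' by have := L2_ge_term (fun l => norm2 (y l)) (s j); rewrite ger0_norm ?norm2_ge0.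
have A1 : `|dot2 (x i0) (x j) - N / M * dot2 (y (s i0)) (y (s j))| <= 3 * nn * N * dl.
  have := @core_bound F F' N M (dot2 (x i0) (x j) / F) (dot2 (y (s i0)) (y (s j)) / F') dl nn
    N0 M0 F0 FN (hdot j jn).
  rewrite [F * _]mulrC divfK ?gt_eqF // [F' * _]mulrC divfK ?gt_eqF //; apply => //.
  by rewrite dot2C; apply: dot_div_le.
have A2 : `|dot2 (perp2 (x i0)) (x j) - N / M * dot2 (perp2 (y (s i0))) (y (s j))| <= 3 * nn * N * dl.
  have := @core_bound F F' N M (dot2 (perp2 (x i0)) (x j) / F) (dot2 (perp2 (y (s i0))) (y (s j)) / F') dl nn
    N0 M0 F0 FN (hperp j jn).
  rewrite [F * _]mulrC divfK ?gt_eqF // [F' * _]mulrC divfK ?gt_eqF //; apply => //.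
  by rewrite dot2C /M -(norm2_perp (y (s i0))); apply: dot_div_le.
have B1 := sq_le_of_abs A1; have B2 := sq_le_of_abs A2.
have : 0 <= nn * N * dl by rewrite !mulr_ge0 ?ler0n // ltW.
move: B1 B2; rewrite !exprMn; nra.
Qed.

End Aux5.


Lemma perm_ex n (i0 k : 'I_n) (sg : 'S_n.-1) :
  {s : 'S_n | s i0 = k /\ forall j, s (lift i0 j) = lift k (sg j)}.
Proof.
pose f x := match unlift i0 x with Some j => lift k (sg j) | None => k end.
have finj : injective f.
  move=> a b; rewrite /f; case: unliftP => [ja ->|->]; case: unliftP => [jb ->|->] //.
  - by move/lift_inj/perm_inj => ->.
  - by move=> e; have := neq_lift k (sg ja); rewrite e eqxx.
  - by move=> e; have := neq_lift k (sg jb); rewrite -e eqxx.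
exists (perm finj); split; first by rewrite permE /f unlift_none.
by move=> j; rewrite permE /f liftK.
Qed.

Unset Implicit Arguments.

Theorem theorem4 (R : realType) (n d m : nat)
    (psi : 'rV[R]_1 -> ('I_n.-1 -> 'rV[R]_3) -> 'rV[R]_d)
    (phi : ('I_n -> 'rV[R]_d) -> 'rV[R]_m) :
  (2 <= n)%N ->
  psi_homogeneous psi -> psi_biLipschitz psi ->
  phi_homogeneous phi -> phi_biLipschitz phi ->
  exists a b : R, 0 < a /\ a <= b /\
    forall X Y : 'M[R]_(2, n),
      a * dGplus X Y <= normInf (Hmap psi phi X - Hmap psi phi Y) /\
      normInf (Hmap psi phi X - Hmap psi phi Y) <= b * dGplus X Y.
Proof.
move=> n2 hpsh [cps [Cps [cps0 [cpsC hps]]]] hphh [cph [Cph [cph0 [cphC hph]]]].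
have n0 : (0 < n)%N by apply: leq_trans n2.
set nn : R := n%:R.
have nn0 : 0 < nn by rewrite /nn ltr0n.
have K0 : 0 < 5 * nn ^+ 2 by rewrite mulr_gt0 // exprn_gt0.
have Cps0 : 0 < Cps by apply: lt_le_trans cpsC.
have Cph0 : 0 < Cph by apply: lt_le_trans cphC.
exists (cph * cps / (5 * nn ^+ 2)), (3 * Cph * Cps); split; last split.
- by rewrite divr_gt0 // mulr_gt0.
- apply: le_trans (_ : cph * cps <= _).
    rewrite ler_pdivrMr // ler_peMr ?mulr_ge0 ?ltW //.
    have : 1 <= nn by rewrite /nn ler1n.
    have : 1 <= nn ^+ 2 by rewrite /nn -natrX ler1n expn_gt0 n0.
    lra.
  apply: le_trans (_ : Cph * Cps <= _); first by rewrite ler_pM // ltW.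
  rewrite -mulrA ler_peMl ?mulr_ge0 ?ltW //; lra.
move=> X Y; rewrite !HmapE //.
set hX := feat psi (centralize X); set hY := feat psi (centralize Y).
split.
- set eps := normInf (phi hX - phi hY).
  have e0 : 0 <= eps by apply: normInf_ge0.
  have hW : cph * Winf hX hY <= eps := proj1 (hph hX hY).
  have P0 := mulr_gt0 cph0 cps0.
  set dl := eps / (cph * cps).
  have dl0 : 0 <= dl by rewrite divr_ge0 // ltW.
  have [tau htau] := Winf_ex hX hY.
  set cX := centralize X; set cY := centralize Y.
  have hi : forall i, Num.max (normInf (vec1 (norm2 (col i cX)) - vec1 (norm2 (col (tau i) cY))))
                      (Winf (inner cX i) (inner cY (tau i))) <= dl.
    move=> i.
    set M := Num.max _ _.
    have h1 : cps * M <= normInf (hX i - hY (tau i)) :=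
      proj1 (hps (vec1 (norm2 (col i cX))) (vec1 (norm2 (col (tau i) cY))) (inner cX i) (inner cY (tau i))).
    have h2 := htau i.
    have h3 : cph * (cps * M) <= cph * Winf hX hY.
      by apply: ler_wpM2l; [exact: ltW | exact: le_trans h1 h2].
    rewrite /dl ler_pdivlMr // (_ : M * (cph * cps) = cph * (cps * M)); last by ring.
    exact: le_trans h3 hW.
  have hnorm : forall i, `|norm2 (col i cX) - norm2 (col (tau i) cY)| <= dl.
    by move=> i; have := hi i; rewrite ge_max normInf_vec1 => /andP[].
  have hinner : forall i, Winf (inner cX i) (inner cY (tau i)) <= dl.
    by move=> i; have := hi i; rewrite ge_max => /andP[].
  have [i0 _ hi0] := @eq_bigmax _ _ 'I_n 0 (Ordinal n0) xpredT (fun i => norm2 (col i cX)) isT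
     (fun i _ => norm2_ge0 _).
  have hmax : forall i, norm2 (col i cX) <= norm2 (col i0 cX).
    by move=> i; rewrite -hi0; exact: (@le_bigmax_cond _ _ _ _ i xpredT (fun i => norm2 (col i cX))).
  have [sg hsg] := Winf_ex (inner cX i0) (inner cY (tau i0)).
  have [s [hs1 hs2]] := perm_ex i0 (tau i0) sg.
  have hvec : forall j, j != i0 -> exists j', j = lift i0 j' /\
     normInf (inner cX i0 j' - inner cY (tau i0) (sg j')) <= dl.
    move=> j jn; rewrite eq_sym in jn; have [j' -> _] := unlift_some jn.
    by exists j'; split => //; exact: le_trans (hsg j') (hinner i0).
  have hvec3 : forall j, j != i0 ->
     `|dot2 (col i0 cX) (col j cX) / L2 (fun l => norm2 (col l cX)) -
       dot2 (col (s i0) cY) (col (s j) cY) / L2 (fun l => norm2 (col l cY))| <= dl /\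
     `|dot2 (perp2 (col i0 cX)) (col j cX) / L2 (fun l => norm2 (col l cX)) -
       dot2 (perp2 (col (s i0) cY)) (col (s j) cY) / L2 (fun l => norm2 (col l cY))| <= dl.
    move=> j jn; have [j' [ej hj]] := hvec j jn.
    rewrite ej hs2 hs1 -!frobE; case: (normInf_vec3_ge
      (dot2 (col i0 cX) (col (lift i0 j') cX) / frob cX)
      (dot2 (perp2 (col i0 cX)) (col (lift i0 j') cX) / frob cX)
      (norm2 (col (lift i0 j') cX))
      (dot2 (col (tau i0) cY) (col (lift (tau i0) (sg j')) cY) / frob cY)
      (dot2 (perp2 (col (tau i0) cY)) (col (lift (tau i0) (sg j')) cY) / frob cY)
      (norm2 (col (lift (tau i0) (sg j')) cY))) => a1 a2 a3.
    by split; [exact: le_trans a1 hj | exact: le_trans a2 hj].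
  have [Q [hQ hL]] := @lower_core R n (fun j => col j cX) (fun j => col j cY) dl tau s i0 n0 dl0
     hnorm hmax hs1 (fun j jn => proj1 (hvec3 j jn)) (fun j jn => proj2 (hvec3 j jn)).
  apply: le_trans (_ : cph * cps / (5 * nn ^+ 2) * (5 * nn ^+ 2 * dl) <= _).
    apply: ler_wpM2l; first by rewrite divr_ge0 ?mulr_ge0 ?ltW.
    exact: le_trans (@dG_le R n X Y s Q hQ) hL.
  rewrite /dl le_eqVlt; apply/orP; left; apply/eqP; field.
  by rewrite !gt_eqF // ?mulr_gt0.
- apply: dG_ge; first by rewrite !mulr_gt0.
  move=> s Q t hQ.
  apply: le_trans (proj2 (hph hX hY)) _.
  have hW : Winf hX hY <= Cps * (3 * Dc X Y s Q).
    apply: (Winf_leB (s := s)).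
      apply: mulr_ge0; first exact: ltW.
      by apply: mulr_ge0 => //; exact: L2_ge0.
    move=> i; apply: feat_upper => //; [by move=> v v' S S'; case: (hps v v' S S') | exact: ltW].
  have hD := @Dc_le R n X Y s Q t n0.
  apply: le_trans (_ : Cph * (Cps * (3 * Dc X Y s Q)) <= _).
    by rewrite ler_wpM2l // ltW.
  have P0 := mulr_gt0 Cph0 Cps0.
  have : Cph * Cps * Dc X Y s Q <= Cph * Cps * dterm X Y s Q t by rewrite ler_wpM2l // ltW.
  lra.
Qed.
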